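(* Fix $\delta>0$. As $T\to\infty$ along $2\mathbb N$, $$Q^1_T(\phi(\delta,T))=\sqrt{1-e^{-2\phi(\delta,\infty)}}\;e^{-c_\delta T}\,(1+o(1)),$$ where $c_\delta:=\phi(\delta,\infty)+\log\big(1+\sqrt{1-e^{-2\phi(\delta,\infty)}}\big)=\frac\delta2+\log\sqrt{2-e^{-\delta}}$.
   Context: $(S_n)$ is the simple symmetric random walk on $\mathbb Z$ started at $0$ with law $\mathbf P$. For $T\in2\mathbb N\cup\{\infty\}$ (convention $\infty\mathbb Z=\{0\}$), $\tau_1^T:=\inf\{n>0:S_n\in T\mathbb Z\}$, $\varepsilon^T_1:=S_{\tau^T_1}/T$, $Q^1_T(\lambda):=\mathbf E[e^{-\lambda\tau^T_1}\mathbf 1_{\{\varepsilon^T_1=1\}}]$ and $Q_T(\lambda):=\mathbf E[e^{-\lambda\tau^T_1}]$. For $\delta>0$, $\phi(\delta,T)$ denotes the unique real solution $\lambda$ of $Q_T(\lambda)=e^{-\delta}$; in particular $\phi(\delta,\infty)=\frac\delta2-\log\sqrt{2-e^{-\delta}}>0$. *)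

(* Defs.v *)
From Stdlib Require Import Reals ZArith List Bool Arith.
Import ListNotations.
Open Scope R_scope.

(* A path of the simple symmetric random walk with n steps is a list of n
   booleans (true = +1, false = -1); under P all 2^n such lists are equally
   likely.  Events depending on the first n steps have probability
   (number of step lists of length n in the event) / 2^n. *)

Fixpoint allseq (n : nat) : list (list bool) :=
  match n with
  | O => [nil]
  | S m => flat_map (fun s => [true :: s; false :: s]) (allseq m)
  end.

Definition step (b : bool) : Z := if b then 1%Z else (-1)%Z.

Fixpoint pos (s : list bool) (k : nat) : Z :=
  match k, s with
  | O, _ => 0%Z
  | S k', b :: s' => (step b + pos s' k')%Z
  | S _, nil => 0%Z
  end.

Definition inTZb (T : nat) (x : Z) : bool := Z.eqb (Z.modulo x (Z.of_nat T)) 0.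

Definition firsthitb (T : nat) (s : list bool) (n : nat) : bool :=
  (0 <? n)%nat && inTZb T (pos s n)
  && forallb (fun k => negb (inTZb T (pos s k))) (seq 1 (n - 1)).

Definition P_tau (T n : nat) : R :=
  INR (length (filter (fun s => firsthitb T s n) (allseq n))) / 2 ^ n.

(* P(tau^T_1 = n, eps^T_1 = 1), i.e. S_tau = T *)
Definition P_tau_eps1 (T n : nat) : R :=
  INR (length (filter (fun s => firsthitb T s n && Z.eqb (pos s n) (Z.of_nat T))
                      (allseq n))) / 2 ^ n.

(* Q_T(lam) = sum_n P(tau = n) e^{-lam n} ;  Q^1_T(lam) analogously *)
Definition Q_terms (T : nat) (lam : R) (n : nat) : R := P_tau T n * exp (- lam * INR n).
Definition Q1_terms (T : nat) (lam : R) (n : nat) : R := P_tau_eps1 T n * exp (- lam * INR n).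

(* phi(delta, infinity), given in closed form in the paper's context *)
Definition phi_inf (delta : R) : R := delta / 2 - ln (sqrt (2 - exp (- delta))).

Definition c_delta (delta : R) : R :=
  phi_inf delta + ln (1 + sqrt (1 - exp (- 2 * phi_inf delta))).

(* Main.v *)
Require Import Defs.
From Stdlib Require Import Reals ZArith List Bool Arith Lia Lra.
Import ListNotations.
Open Scope Z_scope.
Definition fh (T : nat) (x : Z) (s : list bool) (n : nat) : bool :=
  (0 <? n)%nat && inTZb T (x + Defs.pos s n)
  && forallb (fun k => negb (inTZb T (x + Defs.pos s k))) (seq 1 (n - 1)).

Lemma pos_0 s : Defs.pos s 0 = 0%Z.
Proof. destruct s; reflexivity. Qed.

Lemma forallb_map_S (f : nat -> bool) l :
  forallb f (map S l) = forallb (fun k => f (S k)) l.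
Proof. induction l; simpl; congruence. Qed.

Lemma fh_cons T x b s n :
  fh T x (b :: s) (S n) =
  if (n =? 0)%nat then inTZb T (x + step b)
  else negb (inTZb T (x + step b)) && fh T (x + step b) s n.
Proof.
  destruct n as [|m].
  - unfold fh; simpl. rewrite pos_0, Z.add_0_r. now rewrite andb_true_r.
  - unfold fh. simpl (S (S m) - 1)%nat. simpl (S m - 1)%nat.
    replace (m - 0)%nat with m by lia.
    change (seq 1 (S m)) with (1%nat :: seq 2 m).
    rewrite <- (seq_shift m 1). simpl. rewrite forallb_map_S. simpl.
    rewrite pos_0, Z.add_0_r, !Z.add_assoc.
    destruct (inTZb T (x + step b)); simpl; [now rewrite !andb_false_r|].
    f_equal. induction (seq 1 m) as [|a l IH]; simpl; [reflexivity|].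
    rewrite Z.add_assoc, IH. reflexivity.
Qed.

Lemma len_filter_flat (P : list bool -> bool) (l : list (list bool)) :
  length (filter P (flat_map (fun s => [true :: s; false :: s]) l)) =
  (length (filter (fun s => P (true :: s)) l) + length (filter (fun s => P (false :: s)) l))%nat.
Proof.
  induction l as [|a l IH]; simpl; [reflexivity|].
  destruct (P (true :: a)), (P (false :: a)); simpl; rewrite IH; lia.
Qed.

Lemma len_filter_const (c : bool) (Q : list bool -> bool) l :
  length (filter (fun s => c && Q s) l) = if c then length (filter Q l) else 0%nat.
Proof. destruct c; simpl; [reflexivity|]. induction l; simpl; auto. Qed.

Definition cg (T : nat) (tgt : Z -> bool) (x : Z) (n : nat) : nat :=
  length (filter (fun s => fh T x s n && tgt (x + Defs.pos s n)%Z) (allseq n)).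

Definition cb (T : nat) (tgt : Z -> bool) (y : Z) (n : nat) : nat :=
  if inTZb T y then (if (n =? 0)%nat then (if tgt y then 1 else 0) else 0)%nat
  else cg T tgt y n.

Lemma cg_0 T tgt x : cg T tgt x 0 = 0%nat.
Proof. reflexivity. Qed.

Lemma cg_S T tgt x n :
  cg T tgt x (S n) = (cb T tgt (x + 1) n + cb T tgt (x + -1) n)%nat.
Proof.
  unfold cg. simpl allseq. rewrite len_filter_flat.
  assert (H : forall b, length (filter (fun s => fh T x (b :: s) (S n) && tgt (x + Defs.pos (b :: s) (S n))%Z) (allseq n))
    = cb T tgt (x + step b) n).
  { intro b.
    assert (E : forall s, fh T x (b :: s) (S n) && tgt (x + Defs.pos (b :: s) (S n)) =
      if (n =? 0)%nat then inTZb T (x + step b) && tgt (x + step b)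
      else negb (inTZb T (x + step b)) && (fh T (x + step b) s n && tgt (x + step b + Defs.pos s n)%Z)).
    { intro s. rewrite fh_cons. change (Defs.pos (b :: s) (S n)) with (step b + Defs.pos s n)%Z.
      rewrite Z.add_assoc. destruct n; simpl; [rewrite pos_0, Z.add_0_r|]; destruct (inTZb _ _); reflexivity. }
    rewrite (filter_ext _ _ E). unfold cb, cg.
    destruct (n =? 0)%nat eqn:En.
    - apply Nat.eqb_eq in En; subst n. simpl.
      destruct (inTZb T (x + step b)), (tgt (x + step b)); reflexivity.
    - rewrite len_filter_const. destruct (inTZb T (x + step b)); reflexivity. }
  rewrite (H true), (H false). reflexivity.
Qed.

Lemma cg_le T tgt x n : (cg T tgt x n <= cg T (fun _ => true) x n)%nat.
Proof.
  unfold cg. induction (allseq n) as [|a l IH]; simpl; [lia|].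
  destruct (fh T x a n), (tgt (x + Defs.pos a n)); simpl; lia.
Qed.

Close Scope Z_scope.
Open Scope R_scope.
Lemma firsthit_cg T n : INR (length (filter (fun s => firsthitb T s n) (allseq n))) = INR (cg T (fun _ => true) 0 n).
Proof. unfold cg. f_equal. f_equal. apply filter_ext. intro s. rewrite andb_true_r. reflexivity. Qed.

Lemma firsthit1_cg T n : INR (length (filter (fun s => firsthitb T s n && Z.eqb (Defs.pos s n) (Z.of_nat T)) (allseq n)))
  = INR (cg T (fun y => Z.eqb y (Z.of_nat T)) 0 n).
Proof. reflexivity. Qed.

Definition pg T tgt x n : R := INR (cg T tgt x n) / 2 ^ n.
Definition Eb T tgt y n : R := INR (cb T tgt y n) / 2 ^ n.

Lemma pg_0 T tgt x : pg T tgt x 0 = 0.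
Proof. unfold pg. rewrite cg_0. simpl. lra. Qed.

Lemma pg_S T tgt x n : pg T tgt x (S n) = / 2 * (Eb T tgt (x + 1) n + Eb T tgt (x + -1) n).
Proof.
  unfold pg, Eb. rewrite cg_S, plus_INR. simpl (2 ^ S n).
  assert (0 < 2 ^ n) by (apply pow_lt; lra). field. lra.
Qed.

Lemma Eb_int T tgt y n : inTZb T y = false -> Eb T tgt y n = pg T tgt y n.
Proof. intro H. unfold Eb, pg, cb. rewrite H. reflexivity. Qed.

Lemma Eb_bd T tgt y n : inTZb T y = true ->
  Eb T tgt y n = if (n =? 0)%nat then (if tgt y then 1 else 0) else 0.
Proof.
  intro H. unfold Eb, cb. rewrite H. destruct n; simpl.
  - destruct (tgt y); simpl; lra.
  - lra.
Qed.

Lemma Eb_nonneg T tgt y n : 0 <= Eb T tgt y n.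
Proof. unfold Eb. apply Rmult_le_pos; [apply pos_INR| left; apply Rinv_0_lt_compat, pow_lt; lra]. Qed.

Lemma pg_nonneg T tgt y n : 0 <= pg T tgt y n.
Proof. unfold pg. apply Rmult_le_pos; [apply pos_INR| left; apply Rinv_0_lt_compat, pow_lt; lra]. Qed.

Lemma Eb_le T tgt y n : Eb T tgt y n <= Eb T (fun _ => true) y n.
Proof.
  unfold Eb. apply Rmult_le_compat_r.
  - left. apply Rinv_0_lt_compat, pow_lt; lra.
  - apply le_INR. unfold cb. destruct (inTZb T y).
    + destruct n; [destruct (tgt y)|]; simpl; lia.
    + apply cg_le.
Qed.

Lemma isum_ext f g l : (forall n, f n = g n) -> infinite_sum f l -> infinite_sum g l.
Proof.
  intros E H eps Heps. destruct (H eps Heps) as [N HN]. exists N. intros n Hn.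
  replace (sum_f_R0 g n) with (sum_f_R0 f n). auto.
  apply sum_eq. auto.
Qed.

Lemma isum_lin c f g a b : infinite_sum f a -> infinite_sum g b ->
  infinite_sum (fun n => c * f n - g n) (c * a - b).
Proof.
  intros Hf Hg.
  assert (E : forall N, sum_f_R0 (fun n => c * f n - g n) N = c * sum_f_R0 f N - sum_f_R0 g N).
  { induction N; simpl; [ring|]. rewrite IHN. ring. }
  intros eps Heps.
  assert (H := CV_minus (fun N => c * sum_f_R0 f N) (sum_f_R0 g) (c * a) b).
  assert (Hc : Un_cv (fun N => c * sum_f_R0 f N) (c * a)).
  { apply (CV_mult (fun _ => c) (sum_f_R0 f) c a). intros e He. exists 0%nat. intros. unfold Rdist. rewrite Rminus_diag, Rabs_R0. auto. exact Hf. }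
  destruct (H Hc Hg eps Heps) as [N HN]. exists N. intros n Hn. rewrite E. apply HN. auto.
Qed.

Lemma isum_shift f l : infinite_sum f l -> infinite_sum (fun n => f (S n)) (l - f 0%nat).
Proof.
  intros H eps Heps. destruct (H eps Heps) as [N HN]. exists N. intros n Hn.
  assert (E : sum_f_R0 (fun n => f (S n)) n = sum_f_R0 f (S n) - f 0%nat).
  { rewrite (decomp_sum f (S n)) by lia. simpl pred. ring. }
  rewrite E. unfold Rdist. replace (sum_f_R0 f (S n) - f 0%nat - (l - f 0%nat)) with (sum_f_R0 f (S n) - l) by ring.
  apply HN. lia.
Qed.

Lemma isum_delta c s : infinite_sum (fun n => (if (n =? 0)%nat then c else 0) * s ^ n) c.
Proof.
  intros eps Heps. exists 0%nat. intros n _.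
  assert (E : sum_f_R0 (fun n => (if (n =? 0)%nat then c else 0) * s ^ n) n = c).
  { induction n; simpl; [ring|]. rewrite IHn. ring. }
  rewrite E. unfold Rdist. rewrite Rminus_diag, Rabs_R0. auto.
Qed.

Lemma isum_exists_comp (A B : nat -> R) l :
  (forall n, 0 <= A n <= B n) -> infinite_sum B l -> exists l', infinite_sum A l'.
Proof.
  intros H HB. destruct (Rseries_CV_comp A B H (exist _ l HB)) as [l' Hl']. exists l'. exact Hl'.
Qed.

Lemma isum_le (A B : nat -> R) a b : (forall n, A n <= B n) -> infinite_sum A a -> infinite_sum B b -> a <= b.
Proof.
  intros H HA HB. apply (Rle_cv_lim (Un := sum_f_R0 A) (Vn := sum_f_R0 B)); auto.
  intro n. induction n; simpl; auto. apply Rplus_le_compat; auto.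
Qed.

Lemma exp_pow lam n : exp (- lam * INR n) = exp (- lam) ^ n.
Proof.
  induction n.
  - simpl. rewrite Rmult_0_r. apply exp_0.
  - rewrite S_INR, Rmult_plus_distr_l, exp_plus, IHn, Rmult_1_r. simpl. ring.
Qed.

Fixpoint hseq (s a u : R) (k : nat) : R :=
  match k with
  | O => a
  | S k' => match k' with O => u | S k'' => 2 / s * hseq s a u k' - hseq s a u k'' end
  end.

Lemma hseq_SS s a u k : hseq s a u (S (S k)) = 2 / s * hseq s a u (S k) - hseq s a u k.
Proof. reflexivity. Qed.

Lemma chain (F : nat -> nat -> R) s a u T : 0 < s ->
  (forall k, (1 <= k)%nat -> (k < T)%nat -> forall n, F k (S n) = / 2 * (F (k - 1)%nat n + F (S k) n)) ->
  (forall k, (1 <= k)%nat -> (k < T)%nat -> F k 0%nat = 0) ->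
  infinite_sum (fun n => F 0%nat n * s ^ n) a ->
  infinite_sum (fun n => F 1%nat n * s ^ n) u ->
  forall k, (k <= T)%nat -> infinite_sum (fun n => F k n * s ^ n) (hseq s a u k).
Proof.
  intros Hs Hrec H0 Ha Hu.
  assert (G : forall k, (S k <= T)%nat ->
    infinite_sum (fun n => F k n * s ^ n) (hseq s a u k) /\
    infinite_sum (fun n => F (S k) n * s ^ n) (hseq s a u (S k))).
  { induction k as [|k IH]; intros Hk.
    - split; assumption.
    - destruct (IH ltac:(lia)) as [IH1 IH2]. split; [exact IH2|].
      rewrite hseq_SS.
      assert (Hsh := isum_shift _ _ IH2). cbv beta in Hsh.
      rewrite (H0 (S k)) in Hsh by lia.
      replace (hseq s a u (S k) - 0 * s ^ 0) with (hseq s a u (S k)) in Hsh by ring.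
      apply (isum_ext (fun n => 2 / s * (F (S k) (S n) * (s ^ S n)) - F k n * s ^ n)).
      + intro n. rewrite (Hrec (S k)) by lia. replace (S k - 1)%nat with k by lia.
        simpl. field; lra.
      + apply (isum_lin (2 / s) (fun n => F (S k) (S n) * (s ^ S n)) (fun n => F k n * s ^ n)); assumption. }
  intros k Hk. destruct k as [|k].
  - exact Ha.
  - apply (G k Hk).
Qed.

Lemma inTZ_pos T k : (0 < k < T)%nat -> inTZb T (Z.of_nat k) = false.
Proof. intros H. unfold inTZb. apply Z.eqb_neq. intro E. rewrite Z.mod_small in E by lia. lia. Qed.

Lemma inTZ_neg T k : (0 < k < T)%nat -> inTZb T (- Z.of_nat k) = false.
Proof. intros H. unfold inTZb. apply Z.eqb_neq. intro E. apply Z_mod_zero_opp_full in E. rewrite Z.opp_involutive, Z.mod_small in E by lia. lia. Qed.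

Lemma inTZ_0 T : inTZb T 0 = true.
Proof. unfold inTZb. rewrite Zmod_0_l. reflexivity. Qed.

Lemma inTZ_T T : (0 < T)%nat -> inTZb T (Z.of_nat T) = true.
Proof. intros H. unfold inTZb. rewrite Z_mod_same_full. reflexivity. Qed.

Lemma inTZ_mT T : (0 < T)%nat -> inTZb T (- Z.of_nat T) = true.
Proof. intros H. unfold inTZb. apply Z.eqb_eq. apply Z_mod_zero_opp_full. apply Z_mod_same_full. Qed.

Lemma isum_scal c f a : infinite_sum f a -> infinite_sum (fun n => c * f n) (c * a).
Proof.
  intro H. apply (isum_ext (fun n => c * f n - (if (n =? 0)%nat then 0 else 0) * 1 ^ n)).
  - intro n. destruct n; simpl; ring.
  - replace (c * a) with (c * a - 0) by ring. apply isum_lin; auto. apply isum_delta.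
Qed.

Lemma isum_plus f g a b : infinite_sum f a -> infinite_sum g b -> infinite_sum (fun n => f n + g n) (a + b).
Proof.
  intros Hf Hg. apply (isum_ext (fun n => 1 * f n - (-1 * g n))).
  - intro n. ring.
  - replace (a + b) with (1 * a - (-1 * b)) by ring. apply isum_lin; auto. apply isum_scal; auto.
Qed.

Lemma dir T s tgt (d : bool) u : (2 <= T)%nat -> 0 < s ->
  infinite_sum (fun n => Eb T tgt (if d then 1 else -1)%Z n * s ^ n) u ->
  hseq s (if tgt 0%Z then 1 else 0) u T = (if tgt ((if d then 1 else -1) * Z.of_nat T)%Z then 1 else 0).
Proof.
  intros HT Hs Hu.
  set (D := (if d then 1 else -1)%Z) in *.
  set (F := fun k n => Eb T tgt (D * Z.of_nat k)%Z n).
  assert (HF0 : forall n, F 0%nat n = if (n =? 0)%nat then (if tgt 0%Z then 1 else 0) else 0).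
  { intro n. unfold F. rewrite Z.mul_0_r. apply Eb_bd, inTZ_0. }
  assert (HFT : forall n, F T n = if (n =? 0)%nat then (if tgt (D * Z.of_nat T)%Z then 1 else 0) else 0).
  { intro n. unfold F. apply Eb_bd. unfold D; destruct d.
    - rewrite Z.mul_1_l. apply inTZ_T; lia.
    - replace (-1 * Z.of_nat T)%Z with (- Z.of_nat T)%Z by lia. apply inTZ_mT; lia. }
  assert (Hint : forall k, (1 <= k)%nat -> (k < T)%nat -> inTZb T (D * Z.of_nat k) = false).
  { intros k H1 H2. unfold D; destruct d.
    - rewrite Z.mul_1_l. apply inTZ_pos; lia.
    - replace (-1 * Z.of_nat k)%Z with (- Z.of_nat k)%Z by lia. apply inTZ_neg; lia. }
  assert (Hc := chain F s (if tgt 0%Z then 1 else 0) u T Hs).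
  assert (HT2 : infinite_sum (fun n => F T n * s ^ n) (hseq s (if tgt 0%Z then 1 else 0) u T)).
  { apply Hc; try lia.
    - intros k H1 H2 n. unfold F. rewrite Eb_int by (apply Hint; lia). rewrite pg_S.
      unfold D; destruct d.
      + replace (1 * Z.of_nat k + 1)%Z with (1 * Z.of_nat (S k))%Z by lia.
        replace (1 * Z.of_nat k + -1)%Z with (1 * Z.of_nat (k - 1))%Z by lia. ring.
      + replace (-1 * Z.of_nat k + 1)%Z with (-1 * Z.of_nat (k - 1))%Z by lia.
        replace (-1 * Z.of_nat k + -1)%Z with (-1 * Z.of_nat (S k))%Z by lia. ring.
    - intros k H1 H2. unfold F. rewrite Eb_int by (apply Hint; lia). apply pg_0.
    - apply (isum_ext (fun n => (if (n =? 0)%nat then (if tgt 0%Z then 1 else 0) else 0) * s ^ n)).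
      + intro n. rewrite HF0. reflexivity.
      + apply isum_delta.
    - apply (isum_ext (fun n => Eb T tgt D n * s ^ n)); auto.
      intro n. unfold F. rewrite Z.mul_1_r. reflexivity. }
  apply (uniqueness_sum (fun n => F T n * s ^ n)); auto.
  apply (isum_ext (fun n => (if (n =? 0)%nat then (if tgt (D * Z.of_nat T)%Z then 1 else 0) else 0) * s ^ n)).
  + intro n. rewrite HFT. reflexivity.
  + apply isum_delta.
Qed.

Lemma top T s tgt G up um : 0 < s ->
  infinite_sum (fun n => pg T tgt 0 n * s ^ n) G ->
  infinite_sum (fun n => Eb T tgt 1 n * s ^ n) up ->
  infinite_sum (fun n => Eb T tgt (-1) n * s ^ n) um ->
  G = s / 2 * (up + um).
Proof.
  intros Hs HG Hp Hm.
  assert (H1 := isum_shift _ _ HG). cbv beta in H1. rewrite pg_0 in H1.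
  replace (G - 0 * s ^ 0) with G in H1 by ring.
  apply (uniqueness_sum (fun n => pg T tgt 0 (S n) * s ^ S n)); auto.
  apply (isum_ext (fun n => s / 2 * (Eb T tgt 1 n * s ^ n + Eb T tgt (-1) n * s ^ n))).
  - intro n. rewrite pg_S; change (0 + 1)%Z with 1%Z; change (0 + -1)%Z with (-1)%Z; replace (s ^ S n) with (s * s ^ n) by reflexivity. field.
  - apply isum_scal, isum_plus; auto.
Qed.

Lemma exist_pm T s tgt G : 0 < s ->
  infinite_sum (fun n => pg T tgt 0 n * s ^ n) G ->
  (exists up, infinite_sum (fun n => Eb T tgt 1 n * s ^ n) up) /\
  (exists um, infinite_sum (fun n => Eb T tgt (-1) n * s ^ n) um).
Proof.
  intros Hs HG.
  assert (H1 := isum_shift _ _ HG). cbv beta in H1.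
  assert (H2 := isum_scal (2 / s) _ _ H1).
  assert (Hb : forall x n, 0 <= Eb T tgt x n * s ^ n).
  { intros. apply Rmult_le_pos; [apply Eb_nonneg| left; apply pow_lt; auto]. }
  assert (Hps : forall n, 0 < s ^ n) by (intro; apply pow_lt; auto).
  split.
  - eapply (isum_exists_comp (fun n => Eb T tgt 1 n * s ^ n)); [|exact H2].
    intro n. split; [apply Hb|]. cbv beta. rewrite pg_S; change (0 + 1)%Z with 1%Z; change (0 + -1)%Z with (-1)%Z; replace (s ^ S n) with (s * s ^ n) by reflexivity. specialize (Hps n).
    assert (0 <= Eb T tgt (-1) n) by apply Eb_nonneg.
    assert (0 <= Eb T tgt 1 n) by apply Eb_nonneg.
    apply Rle_trans with (Eb T tgt 1 n * s ^ n + Eb T tgt (-1) n * s ^ n).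
    + assert (0 <= Eb T tgt (-1) n * s ^ n) by nra. lra.
    + right. field. lra.
  - eapply (isum_exists_comp (fun n => Eb T tgt (-1) n * s ^ n)); [|exact H2].
    intro n. split; [apply Hb|]. cbv beta. rewrite pg_S; change (0 + 1)%Z with 1%Z; change (0 + -1)%Z with (-1)%Z; replace (s ^ S n) with (s * s ^ n) by reflexivity. specialize (Hps n).
    assert (0 <= Eb T tgt (-1) n) by apply Eb_nonneg.
    assert (0 <= Eb T tgt 1 n) by apply Eb_nonneg.
    apply Rle_trans with (Eb T tgt 1 n * s ^ n + Eb T tgt (-1) n * s ^ n).
    + assert (0 <= Eb T tgt 1 n * s ^ n) by nra. lra.
    + right. field. lra.
Qed.

Lemma hseq_one a u k : hseq 1 a u k = a + INR k * (u - a).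
Proof.
  assert (G : forall k, hseq 1 a u k = a + INR k * (u - a) /\ hseq 1 a u (S k) = a + INR (S k) * (u - a)).
  { clear k; intro k; induction k as [|k [IH1 IH2]].
    - simpl. split; ring.
    - split; [exact IH2|]. rewrite hseq_SS, IH1, IH2. rewrite !S_INR. field. }
  apply G.
Qed.

Lemma hseq_z s z a u k : 0 < z -> s = 2 * z / (1 + z ^ 2) ->
  hseq s a u k * z ^ k * (1 - z ^ 2) = (u - z * a) * z * (1 - (z ^ k) ^ 2) + a * (z ^ k) ^ 2 * (1 - z ^ 2).
Proof.
  intros Hz Hs.
  assert (G : forall k,
    hseq s a u k * z ^ k * (1 - z ^ 2) = (u - z * a) * z * (1 - (z ^ k) ^ 2) + a * (z ^ k) ^ 2 * (1 - z ^ 2) /\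
    hseq s a u (S k) * z ^ (S k) * (1 - z ^ 2) = (u - z * a) * z * (1 - (z ^ (S k)) ^ 2) + a * (z ^ (S k)) ^ 2 * (1 - z ^ 2)).
  { clear k; intro k; induction k as [|k [IH1 IH2]].
    - simpl. split; ring.
    - split; [exact IH2|]. rewrite hseq_SS.
      set (h0 := hseq s a u k) in *. set (h1 := hseq s a u (S k)) in *.
      simpl in IH1, IH2 |- *. set (X := z ^ k) in *.
      assert (E : (2 / s * h1 - h0) * (z * (z * X)) * (1 - z * (z * 1)) =
        (1 + z * (z * 1)) * (h1 * (z * X) * (1 - z * (z * 1))) - z * (z * 1) * (h0 * X * (1 - z * (z * 1)))).
      { rewrite Hs. field. split; nra. }
      rewrite E, IH1, IH2. ring. }
  apply G.
Qed.

Lemma z_of_s s : 0 < s < 1 -> exists z, 0 < z < 1 /\ s = 2 * z / (1 + z ^ 2).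
Proof.
  intros Hs. set (r := sqrt (1 - s ^ 2)).
  assert (Hr2 : r * r = 1 - s ^ 2) by (unfold r; apply sqrt_sqrt; nra).
  assert (Hr0 : 0 <= r) by (unfold r; apply sqrt_pos).
  assert (Hr1 : r < 1) by nra.
  assert (Hr3 : 1 - s < r) by nra.
  exists ((1 - r) / s). split; [split|].
  - apply Rdiv_lt_0_compat; lra.
  - apply (Rmult_lt_reg_r s); [lra|]. unfold Rdiv. rewrite Rmult_assoc, Rinv_l by lra. lra.
  - field_simplify_eq; [|split; [lra|]].
    + nra.
    + assert (0 < s ^ 2 + (1 - r) ^ 2) by nra. nra.
Qed.

Lemma perT T lam q q1 : (2 <= T)%nat -> q < 1 ->
  infinite_sum (Q_terms T lam) q -> infinite_sum (Q1_terms T lam) q1 ->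
  exists z, 0 < z < 1 /\
    q = 2 * z ^ 2 / (1 + z ^ 2) + 2 * z ^ T * (1 - z ^ 2) / ((1 + z ^ 2) * (1 + z ^ T)) /\
    q1 = z ^ T * (1 - z ^ 2) / ((1 + z ^ 2) * (1 - (z ^ T) ^ 2)).
Proof.
  intros HT Hq HQ HQ1.
  set (s := exp (- lam)).
  assert (Hs0 : 0 < s) by apply exp_pos.
  set (tgt1 := fun y => Z.eqb y (Z.of_nat T)).
  assert (HQ' : infinite_sum (fun n => pg T (fun _ => true) 0 n * s ^ n) q).
  { apply (isum_ext (Q_terms T lam)); auto. intro n. unfold Q_terms, P_tau.
    rewrite firsthit_cg, exp_pow. reflexivity. }
  assert (HQ1' : infinite_sum (fun n => pg T tgt1 0 n * s ^ n) q1).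
  { apply (isum_ext (Q1_terms T lam)); auto. intro n. unfold Q1_terms, P_tau_eps1.
    rewrite firsthit1_cg, exp_pow. reflexivity. }
  clear HQ HQ1.
  assert (HT0 : 0 < INR T) by (apply lt_0_INR; lia).
  destruct (Rlt_or_le s 1) as [Hs1|Hs1].
  2:{ exfalso.
    assert (Hc : forall n, 0 <= pg T (fun _ => true) 0 n * 1 ^ n <= pg T (fun _ => true) 0 n * s ^ n).
    { intro n. rewrite pow1. split.
      - rewrite Rmult_1_r. apply pg_nonneg.
      - assert (H := pg_nonneg T (fun _ => true) 0 n). assert (1 <= s ^ n) by (apply pow_R1_Rle; auto). nra. }
    destruct (isum_exists_comp _ _ _ Hc HQ') as [l Hl].
    assert (Hlq : l <= q) by (apply (isum_le _ _ _ _ (fun n => proj2 (Hc n)) Hl HQ')).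
    destruct (exist_pm T 1 (fun _ => true) l ltac:(lra) Hl) as [[up Hup] [um Hum]].
    assert (E := top T 1 _ l up um ltac:(lra) Hl Hup Hum).
    assert (D1 := dir T 1 (fun _ => true) true up HT ltac:(lra) Hup).
    assert (D2 := dir T 1 (fun _ => true) false um HT ltac:(lra) Hum).
    cbv beta iota in D1, D2. rewrite hseq_one in D1, D2.
    assert (up = 1). { apply (Rmult_eq_reg_l (INR T)); nra. }
    assert (um = 1). { apply (Rmult_eq_reg_l (INR T)); nra. }
    subst. lra. }
  destruct (z_of_s s (conj Hs0 Hs1)) as [z [Hz Hsz]].
  assert (HX : 0 < z ^ T < 1).
  { split; [apply pow_lt; lra|]. apply pow_lt_1_compat; [lra|lia]. }
  set (X := z ^ T) in *.
  exists z. split; [exact Hz|].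
  destruct (exist_pm T s (fun _ => true) q Hs0 HQ') as [[up Hup] [um Hum]].
  assert (E := top T s _ q up um Hs0 HQ' Hup Hum).
  assert (D1 := dir T s (fun _ => true) true up HT Hs0 Hup).
  assert (D2 := dir T s (fun _ => true) false um HT Hs0 Hum).
  cbv beta iota in D1, D2.
  assert (Z1 := hseq_z s z 1 up T ltac:(lra) Hsz). rewrite D1 in Z1. fold X in Z1.
  assert (Z2 := hseq_z s z 1 um T ltac:(lra) Hsz). rewrite D2 in Z2. fold X in Z2.
  assert (HX2 : X ^ 2 < 1) by nra.
  assert (Hnz : 0 < z * (1 - X ^ 2)) by (apply Rmult_lt_0_compat; lra).
  fold X.
  assert (K1 : (up - z) * (z * (1 - X ^ 2)) = X * (1 - z ^ 2) * (1 - X)).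
  { replace (X * (1 - z ^ 2) * (1 - X)) with (1 * X * (1 - z ^ 2) - 1 * X ^ 2 * (1 - z ^ 2)) by ring.
    rewrite Z1. ring. }
  assert (K2 : (um - z) * (z * (1 - X ^ 2)) = X * (1 - z ^ 2) * (1 - X)).
  { replace (X * (1 - z ^ 2) * (1 - X)) with (1 * X * (1 - z ^ 2) - 1 * X ^ 2 * (1 - z ^ 2)) by ring.
    rewrite Z2. ring. }
  assert (Hup' : up = z + X * (1 - z ^ 2) / (z * (1 + X))).
  { apply (Rmult_eq_reg_r (z * (1 - X ^ 2))); [|lra].
    replace ((z + X * (1 - z ^ 2) / (z * (1 + X))) * (z * (1 - X ^ 2))) with
      (z * (z * (1 - X ^ 2)) + X * (1 - z ^ 2) * (1 - X)) by (field; lra). lra. }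
  assert (Hum' : um = z + X * (1 - z ^ 2) / (z * (1 + X))).
  { apply (Rmult_eq_reg_r (z * (1 - X ^ 2))); [|lra].
    replace ((z + X * (1 - z ^ 2) / (z * (1 + X))) * (z * (1 - X ^ 2))) with
      (z * (z * (1 - X ^ 2)) + X * (1 - z ^ 2) * (1 - X)) by (field; lra). lra. }
  split.
  { rewrite E, Hup', Hum', Hsz. field. split; nra. }
  assert (Hc1 : forall x n, 0 <= Eb T tgt1 x n * s ^ n <= Eb T (fun _ => true) x n * s ^ n).
  { intros x n. assert (0 < s ^ n) by (apply pow_lt; auto).
    assert (H1 := Eb_nonneg T tgt1 x n). assert (H2 := Eb_le T tgt1 x n). split; nra. }
  destruct (isum_exists_comp _ _ _ (Hc1 1%Z) Hup) as [up1 Hup1].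
  destruct (isum_exists_comp _ _ _ (Hc1 (-1)%Z) Hum) as [um1 Hum1].
  assert (E1 := top T s _ q1 up1 um1 Hs0 HQ1' Hup1 Hum1).
  assert (D3 := dir T s tgt1 true up1 HT Hs0 Hup1).
  assert (D4 := dir T s tgt1 false um1 HT Hs0 Hum1).
  assert (Ht0 : tgt1 0%Z = false) by (unfold tgt1; apply Z.eqb_neq; lia).
  assert (Ht1 : tgt1 (1 * Z.of_nat T)%Z = true) by (unfold tgt1; apply Z.eqb_eq; lia).
  assert (Ht2 : tgt1 (-1 * Z.of_nat T)%Z = false) by (unfold tgt1; apply Z.eqb_neq; lia).
  rewrite Ht0 in D3, D4. rewrite Ht1 in D3. rewrite Ht2 in D4.
  assert (Z3 := hseq_z s z 0 up1 T ltac:(lra) Hsz). rewrite D3 in Z3. fold X in Z3.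
  assert (Z4 := hseq_z s z 0 um1 T ltac:(lra) Hsz). rewrite D4 in Z4. fold X in Z4.
  assert (K3 : up1 * (z * (1 - X ^ 2)) = X * (1 - z ^ 2)).
  { replace (X * (1 - z ^ 2)) with (1 * X * (1 - z ^ 2)) by ring. rewrite Z3. ring. }
  assert (K4 : um1 * (z * (1 - X ^ 2)) = 0).
  { replace 0 with (0 * X * (1 - z ^ 2)) by ring. rewrite Z4. ring. }
  assert (um1 = 0) by nra.
  assert (Hup1' : up1 = X * (1 - z ^ 2) / (z * (1 - X ^ 2))).
  { apply (Rmult_eq_reg_r (z * (1 - X ^ 2))); [|lra]. rewrite K3. field. nra. }
  rewrite E1, Hup1'. subst um1. rewrite Hsz. field. split; nra.
Qed.

Lemma bern_down t m : 0 <= t <= 1 -> 1 - INR m * t <= (1 - t) ^ m.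
Proof.
  intros Ht. induction m.
  - simpl. lra.
  - rewrite S_INR. simpl.
    assert (0 <= (1 - t) ^ m) by (apply pow_le; lra).
    destruct (Rle_or_lt (1 - INR m * t) 0).
    + nra.
    + assert (0 <= INR m) by apply pos_INR. nra.
Qed.

Lemma bern_up h m : 0 <= h -> 1 + INR m * h <= (1 + h) ^ m.
Proof.
  intros Hh. induction m.
  - simpl. lra.
  - rewrite S_INR. simpl. assert (0 <= INR m) by apply pos_INR. nra.
Qed.

Lemma growth Y th : 0 < Y < 1 -> 0 < th -> exists M, forall m, (M <= m)%nat -> INR m * Y ^ m < th.
Proof.
  intros HY Hth.
  set (r := sqrt Y).
  assert (Hr2 : r * r = Y) by (apply sqrt_sqrt; lra).
  assert (Hr0 : 0 < r) by (apply sqrt_lt_R0; lra).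
  assert (Hr1 : r < 1) by nra.
  set (h := / r - 1).
  assert (Hh : 0 < h). { unfold h. assert (1 < / r). { rewrite <- Rinv_1. apply Rinv_lt_contravar; lra. } lra. }
  destruct (pow_lt_1_zero r ltac:(rewrite Rabs_right; lra) (th * h) ltac:(nra)) as [N HN].
  exists N. intros m Hm.
  specialize (HN m Hm). rewrite Rabs_right in HN by (apply Rle_ge, pow_le; lra).
  assert (B := bern_up h m (Rlt_le _ _ Hh)).
  assert (E1 : (1 + h) ^ m * r ^ m = 1).
  { rewrite <- Rpow_mult_distr. unfold h. replace ((1 + (/ r - 1)) * r) with 1 by (field; lra). apply pow1. }
  assert (Hrm : 0 < r ^ m) by (apply pow_lt; lra).
  assert (E2 : Y ^ m = r ^ m * r ^ m) by (rewrite <- Rpow_mult_distr, Hr2; reflexivity).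
  assert (0 <= INR m) by apply pos_INR.
  assert (K : INR m * r ^ m * h <= 1) by nra.
  rewrite E2.
  assert (INR m * r ^ m <= / h).
  { apply (Rmult_le_reg_r h); [lra|]. rewrite Rinv_l by lra. lra. }
  assert (INR m * r ^ m * r ^ m <= / h * r ^ m) by nra.
  assert (/ h * r ^ m < th).
  { apply (Rmult_lt_reg_l h); [lra|]. rewrite <- Rmult_assoc, Rinv_r by lra. lra. }
  lra.
Qed.

Lemma final_bound Z Y rho W b eps K :
  0 < Z <= Y -> Y < 1 -> 1 - 4 * b <= rho <= 1 -> 0 <= W <= b -> Y - Z <= 4 * b -> 0 <= b ->
  K = 4 / (1 - Y) -> b * K <= 1 -> b * (2 * K + 14) < eps ->
  Rabs (rho * (1 - Z) * (1 + Y) / ((1 + Z) * (1 - Y) * (1 - W)) - 1) < eps.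
Proof.
  intros HZ HY Hrho HW HYZ Hb HK HbK Heps.
  assert (HK4 : 4 <= K).
  { rewrite HK. unfold Rdiv. apply (Rmult_le_reg_r (1 - Y)); [lra|].
    rewrite Rmult_assoc, Rinv_l by lra. nra. }
  assert (Hb4 : b <= 1/4) by nra.
  set (f1 := (1 - Z) / (1 - Y)). set (f2 := (1 + Y) / (1 + Z)). set (f3 := / (1 - W)).
  assert (E : rho * (1 - Z) * (1 + Y) / ((1 + Z) * (1 - Y) * (1 - W)) = rho * f1 * f2 * f3).
  { unfold f1, f2, f3. field. lra. }
  assert (F1 : 1 <= f1 <= 1 + K * b).
  { unfold f1. split.
    - apply (Rmult_le_reg_r (1 - Y)); [lra|]. unfold Rdiv. rewrite Rmult_assoc, Rinv_l by lra. lra.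
    - apply (Rmult_le_reg_r (1 - Y)); [lra|]. unfold Rdiv. rewrite Rmult_assoc, Rinv_l by lra.
      rewrite HK. replace ((1 + 4 / (1 - Y) * b) * (1 - Y)) with (1 - Y + 4 * b) by (field; lra). lra. }
  assert (F2 : 1 <= f2 <= 1 + 4 * b).
  { unfold f2. split.
    - apply (Rmult_le_reg_r (1 + Z)); [lra|]. unfold Rdiv. rewrite Rmult_assoc, Rinv_l by lra. lra.
    - apply (Rmult_le_reg_r (1 + Z)); [lra|]. unfold Rdiv. rewrite Rmult_assoc, Rinv_l by lra. nra. }
  assert (F3 : 1 <= f3 <= 1 + 2 * b).
  { unfold f3. split.
    - apply (Rmult_le_reg_r (1 - W)); [lra|]. rewrite Rinv_l by lra. lra.
    - apply (Rmult_le_reg_r (1 - W)); [lra|]. rewrite Rinv_l by lra. nra. }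
  rewrite E. apply Rabs_def1.
  - assert (U1 : f1 * f2 <= 1 + (K + 8) * b).
    { assert (f1 * f2 <= (1 + K * b) * (1 + 4 * b)) by (apply Rmult_le_compat; lra). nra. }
    assert (U2 : f1 * f2 * f3 <= 1 + (K + 16) * b).
    { assert (f1 * f2 * f3 <= (1 + (K + 8) * b) * (1 + 2 * b)).
      { apply Rmult_le_compat; try lra. nra. }
      nra. }
    assert (rho * f1 * f2 * f3 <= f1 * f2 * f3).
    { replace (rho * f1 * f2 * f3) with (rho * (f1 * f2 * f3)) by ring.
      assert (1 <= f1 * f2 * f3) by (assert (1 <= f1 * f2) by nra; nra). nra. }
    nra.
  - assert (1 <= f1 * f2 * f3) by (assert (1 <= f1 * f2) by nra; nra).
    assert (rho * f1 * f2 * f3 >= rho).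
    { replace (rho * f1 * f2 * f3) with (rho * (f1 * f2 * f3)) by ring. nra. }
    nra.
Qed.

Lemma consts delta : 0 < delta ->
  let q := exp (- delta) in
  0 < q < 1 /\ sqrt (1 - exp (- 2 * phi_inf delta)) = 1 - q /\
  0 < exp (- c_delta delta) /\ exp (- c_delta delta) ^ 2 = q / (2 - q).
Proof.
  intros Hd q.
  assert (Hq : 0 < q < 1).
  { split; [apply exp_pos|]. unfold q. rewrite <- exp_0. apply exp_increasing. lra. }
  set (a := sqrt (2 - q)).
  assert (Ha2 : a * a = 2 - q) by (apply sqrt_sqrt; lra).
  assert (Ha : 0 < a) by (apply sqrt_lt_R0; lra).
  assert (E2 : exp (- 2 * phi_inf delta) = q * (2 - q)).
  { unfold phi_inf. fold q. fold a.
    replace (- 2 * (delta / 2 - ln a)) with (- delta + (ln a + ln a)) by field.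
    rewrite !exp_plus, exp_ln by lra. fold q. nra. }
  assert (Es : sqrt (1 - exp (- 2 * phi_inf delta)) = 1 - q).
  { rewrite E2. replace (1 - q * (2 - q)) with ((1 - q) ^ 2) by ring. apply sqrt_pow2. lra. }
  split; [exact Hq|]. split; [exact Es|]. split; [apply exp_pos|].
  unfold c_delta. rewrite Es. replace (1 + (1 - q)) with (2 - q) by ring.
  replace (exp (- (phi_inf delta + ln (2 - q))) ^ 2) with
    (exp (- 2 * phi_inf delta) * (exp (- ln (2 - q)) * exp (- ln (2 - q)))).
  2:{ simpl. rewrite <- !exp_plus. replace (- 2 * phi_inf delta + (- ln (2 - q) + - ln (2 - q))) with
      (- (phi_inf delta + ln (2 - q)) + (- (phi_inf delta + ln (2 - q)) + 0)) by ring.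
      rewrite !exp_plus, exp_0. ring. }
  rewrite E2, exp_Ropp, exp_ln by lra. field. lra.
Qed.

Theorem lemma7 (delta : R) (hdelta : 0 < delta) (phi : nat -> R)
  (hphi : forall T : nat, (2 <= T)%nat -> Nat.Even T ->
            infinite_sum (Q_terms T (phi T)) (exp (- delta))) :
  forall eps : R, 0 < eps ->
  exists N : nat, forall T : nat, (N <= T)%nat -> (2 <= T)%nat -> Nat.Even T ->
    forall q1 : R, infinite_sum (Q1_terms T (phi T)) q1 ->
      Rabs (q1 / (sqrt (1 - exp (- 2 * phi_inf delta)) * exp (- c_delta delta * INR T)) - 1)
        < eps.
Proof.
  intros eps Heps.
  destruct (consts delta hdelta) as [Hq [Es [Hz0 Hz2]]].
  set (q := exp (- delta)) in *.
  set (zeta := exp (- c_delta delta)) in *.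
  set (Y := zeta ^ 2) in *.
  assert (HY : 0 < Y < 1).
  { split; [unfold Y; apply pow_lt; lra|]. rewrite Hz2.
    apply (Rmult_lt_reg_r (2 - q)); [lra|]. unfold Rdiv. rewrite Rmult_assoc, Rinv_l by lra. lra. }
  assert (HqY : q = 2 * Y / (1 + Y)). { rewrite Hz2. field. lra. }
  set (K := 4 / (1 - Y)).
  assert (HK : 0 < K) by (unfold K; apply Rdiv_lt_0_compat; lra).
  set (th := Rmin (1 / K) (eps / (2 * K + 15))).
  assert (Hth : 0 < th).
  { unfold th. apply Rmin_glb_lt; apply Rdiv_lt_0_compat; lra. }
  destruct (growth Y (th * Y) HY ltac:(nra)) as [M HM].
  exists (2 * M + 2)%nat. intros T HN HT2 HE q1 Hq1.
  destruct HE as [m Hm].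
  assert (HmM : (M <= m)%nat) by lia.
  assert (Hm1 : (1 <= m)%nat) by lia.
  assert (HE : Nat.Even T) by (exists m; exact Hm).
  destruct (perT T (phi T) q q1 HT2 ltac:(lra) (hphi T HT2 HE) Hq1) as [z [Hz [Eq Eq1]]].
  rewrite Es, exp_pow. fold zeta.
  assert (HzT : zeta ^ T = Y ^ m) by (rewrite Hm, pow_mult; reflexivity).
  rewrite HzT.
  set (Z := z ^ 2) in *.
  assert (HX : z ^ T = Z ^ m) by (rewrite Hm, pow_mult; reflexivity).
  rewrite HX in Eq, Eq1.
  set (X := Z ^ m) in *.
  assert (HZ : 0 < Z < 1) by (unfold Z; split; nra).
  assert (HXb : 0 < X < 1).
  { unfold X. split; [apply pow_lt; lra|]. apply pow_lt_1_compat; [lra|lia]. }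
  assert (HYm : 0 < Y ^ m) by (apply pow_lt; lra).
  set (ex := 2 * X * (1 - Z) / ((1 + Z) * (1 + X))).
  assert (Hex0 : 0 <= ex).
  { unfold ex. apply Rmult_le_pos; [nra|]. left. apply Rinv_0_lt_compat. nra. }
  assert (Hex1 : ex <= 2 * X).
  { unfold ex. apply (Rmult_le_reg_r ((1 + Z) * (1 + X))); [nra|].
    unfold Rdiv. rewrite Rmult_assoc, Rinv_l by nra. nra. }
  assert (Hdiff : 2 * (Y - Z) / ((1 + Y) * (1 + Z)) = ex).
  { replace ex with (q - 2 * Z / (1 + Z)) by (rewrite Eq; unfold ex; ring).
    rewrite HqY. field. lra. }
  assert (HYZ : Y - Z = ex * ((1 + Y) * (1 + Z)) / 2).
  { rewrite <- Hdiff. field. nra. }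
  assert (HD : 0 <= ex * ((1 + Y) * (1 + Z)) <= 2 * X * 4).
  { split; [apply Rmult_le_pos; nra|]. apply Rmult_le_compat; nra. }
  assert (HZY : Z <= Y) by lra.
  assert (HXY : X <= Y ^ m) by (unfold X; apply pow_incr; lra).
  assert (HYZ4 : Y - Z <= 4 * X) by lra.
  set (b := INR m * Y ^ m / Y).
  assert (HINR : 1 <= INR m) by (apply (le_INR 1); lia).
  assert (Hb : b < th).
  { unfold b. apply (Rmult_lt_reg_r Y); [lra|]. unfold Rdiv. rewrite Rmult_assoc, Rinv_l by lra.
    rewrite Rmult_1_r. apply HM. exact HmM. }
  assert (HYb : Y ^ m <= b).
  { unfold b. apply (Rmult_le_reg_r Y); [lra|]. unfold Rdiv. rewrite Rmult_assoc, Rinv_l by lra. nra. }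
  assert (Hb0 : 0 <= b) by lra.
  set (rho := (Z / Y) ^ m).
  assert (Hrho : rho = X / Y ^ m) by (unfold rho, X, Rdiv; rewrite Rpow_mult_distr, pow_inv; reflexivity).
  assert (Hrho1 : 1 - 4 * b <= rho <= 1).
  { split.
    - unfold rho. replace (Z / Y) with (1 - (Y - Z) / Y) by (field; lra).
      assert (Ht : 0 <= (Y - Z) / Y <= 1).
      { split; [unfold Rdiv; apply Rmult_le_pos; [lra|left; apply Rinv_0_lt_compat; lra]|]. apply (Rmult_le_reg_r Y); [lra|]. unfold Rdiv.
        rewrite Rmult_assoc, Rinv_l by lra. lra. }
      assert (B := bern_down _ m Ht).
      assert (INR m * ((Y - Z) / Y) <= 4 * b).
      { unfold b. unfold Rdiv. assert (0 < / Y) by (apply Rinv_0_lt_compat; lra).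
        assert (0 <= INR m) by lra. 
        assert (INR m * (Y - Z) <= INR m * (4 * Y ^ m)) by nra. nra. }
      lra.
    - unfold rho. rewrite <- (pow1 m). apply pow_incr. split.
      + unfold Rdiv; apply Rmult_le_pos; [lra|left; apply Rinv_0_lt_compat; lra].
      + apply (Rmult_le_reg_r Y); [lra|]. unfold Rdiv. rewrite Rmult_assoc, Rinv_l by lra. lra. }
  assert (HW : 0 <= X ^ 2 <= b) by (split; nra).
  assert (Hbk : b * K <= 1).
  { assert (th <= 1 / K) by apply Rmin_l.
    apply (Rle_trans _ (1 / K * K)); [nra|]. right. field. lra. }
  assert (Hbe : b * (2 * K + 14) < eps).
  { assert (th <= eps / (2 * K + 15)) by apply Rmin_r.
    assert (b * (2 * K + 15) < eps).
    { apply (Rlt_le_trans _ (eps / (2 * K + 15) * (2 * K + 15))); [nra|]. right. field. lra. }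
    nra. }
  assert (FB := final_bound Z Y rho (X ^ 2) b eps K (conj (proj1 HZ) HZY) (proj2 HY) Hrho1 HW
    ltac:(lra) Hb0 eq_refl Hbk Hbe).
  replace (q1 / ((1 - q) * Y ^ m)) with (rho * (1 - Z) * (1 + Y) / ((1 + Z) * (1 - Y) * (1 - X ^ 2))).
  { exact FB. }
  rewrite Hrho, Eq1, HqY. field. repeat split; nra.
Qed.
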